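(* Let $L$ be a locale and let $F$ be a sheaf of monomorphisms on $L_{+}$. For every $x \in F(i)$, the set $\{c \in L : x \in F(c)\}$ has a (unique) maximum element $s_x$; that is, $s_x = \bigvee_{x \in F(c)} c$ satisfies $x \in F(s_x)$.
   Context: A locale (frame) $L$ is a complete lattice in which finite meets distribute over arbitrary joins. It carries a Grothendieck topology in which a family $\{b_j \le a\}$ covers $a$ iff $\bigvee_j b_j = a$; a sieve on $a$ (a downward closed set of elements $\le a$) is covering iff its join is $a$. A presheaf on $L$ is a functor $L^{op}\to\mathbf{Set}$; it is a sheaf if $F(a)\to\varprojlim_{b\in R}F(b)$ is a bijection for every covering sieve $R$ of every $a$. Write $i$ for the bottom (initial) element of $L$, and $L_{+}=L\sqcup\{0\}$ for the locale obtained by adjoining a new bottom element $0<i$. A sheaf of monomorphisms on $L_{+}$ is a sheaf $F$ on $L_{+}$ such that for every relation $a\le b$ in $L$ the restriction $F(b)\to F(a)$ is injective. The set $F(i)$ is the generic fibre; for $c\in L$, since $F(c)\to F(i)$ is injective, we regard $F(c)$ as a subset of $F(i)$ and write $x\in F(c)$ for $x\in F(i)$ lying in the image of $F(c)\to F(i)$. *)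

(* Defs.v *)
Record Frame := {
  fcar :> Type;
  fle : fcar -> fcar -> Prop;
  fsup : (fcar -> Prop) -> fcar;
  fmeet : fcar -> fcar -> fcar;
  fle_refl : forall a, fle a a;
  fle_trans : forall a b c, fle a b -> fle b c -> fle a c;
  fle_antisym : forall a b, fle a b -> fle b a -> a = b;
  fsup_ub : forall (S : fcar -> Prop) a, S a -> fle a (fsup S);
  fsup_least : forall (S : fcar -> Prop) b, (forall a, S a -> fle a b) -> fle (fsup S) b;
  fmeet_l : forall a b, fle (fmeet a b) a;
  fmeet_r : forall a b, fle (fmeet a b) b;
  fmeet_glb : forall a b c, fle c a -> fle c b -> fle c (fmeet a b);
  fdistr : forall a (S : fcar -> Prop),
      fmeet a (fsup S) = fsup (fun c => exists s, S s /\ c = fmeet a s)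
}.

Arguments fle {_}.
Arguments fsup {_}.
Arguments fmeet {_}.

Definition fbot (L : Frame) : L := fsup (fun _ : L => False).

Lemma fbot_le (L : Frame) (c : L) : fle (fbot L) c.
Proof. apply fsup_least. intros a []. Qed.

Record Presheaf (T : Type) (le : T -> T -> Prop) := {
  sec : T -> Type;
  restr : forall a b, le a b -> sec b -> sec a;
  restr_id : forall a (p : le a a) x, restr a a p x = x;
  restr_comp : forall a b c (p : le a b) (q : le b c) (r : le a c) x,
      restr a b p (restr b c q x) = restr a c r x
}.

Arguments sec {_ _}.
Arguments restr {_ _} _ {_ _}.

Definition is_sieve {T} (le : T -> T -> Prop) (R : T -> Prop) (a : T) : Prop :=
  (forall b, R b -> le b a) /\ (forall b c, R b -> le c b -> R c).

Definition covers {T} (le : T -> T -> Prop) (R : T -> Prop) (a : T) : Prop :=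
  (forall b, R b -> le b a) /\ (forall u, (forall b, R b -> le b u) -> le a u).

Definition compatible {T le} (F : Presheaf T le) (R : T -> Prop)
    (s : forall b, R b -> sec F b) : Prop :=
  forall b c (hb : R b) (hc : R c) (p : le c b), restr F p (s b hb) = s c hc.

Definition is_sheaf {T le} (F : Presheaf T le) : Prop :=
  forall (a : T) (R : T -> Prop), is_sieve le R a -> covers le R a ->
    (forall x y : sec F a,
        (forall b (hb : R b) (p : le b a), restr F p x = restr F p y) -> x = y)
    /\
    (forall s : forall b, R b -> sec F b, compatible F R s ->
        exists x : sec F a, forall b (hb : R b) (p : le b a), restr F p x = s b hb).

(* L_+ = L with a new bottom element 0 (represented by None). *)
Definition Lplus (L : Frame) : Type := option L.

Definition le_plus (L : Frame) (u v : Lplus L) : Prop :=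
  match u, v with
  | None, _ => True
  | Some _, None => False
  | Some a, Some b => fle a b
  end.

Definition is_mono {L : Frame} (F : Presheaf (Lplus L) (le_plus L)) : Prop :=
  forall (a b : L) (p : le_plus L (Some a) (Some b)) (x y : sec F (Some b)),
    restr F p x = restr F p y -> x = y.

(* x in F(i) lies in F(c): x is in the image of F(c) -> F(i). *)
Definition in_fibre {L : Frame} (F : Presheaf (Lplus L) (le_plus L))
    (c : L) (x : sec F (Some (fbot L))) : Prop :=
  exists y : sec F (Some c),
    restr F (fbot_le L c : le_plus L (Some (fbot L)) (Some c)) y = x.

(* Main.v *)
Require Import Defs.
From Stdlib Require Import ClassicalEpsilon.

Section K.
Variables (L : Frame) (F : Presheaf (Lplus L) (le_plus L)).
Hypothesis (Hmono : is_mono F).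
Variable (x : sec F (Some (fbot L))).

Lemma key (u : Lplus L) c1 c2 (y1 : sec F (Some c1)) (y2 : sec F (Some c2))
  (h1 : restr F (fbot_le L c1 : le_plus L (Some (fbot L)) (Some c1)) y1 = x)
  (h2 : restr F (fbot_le L c2 : le_plus L (Some (fbot L)) (Some c2)) y2 = x)
  (p1 : le_plus L u (Some c1)) (p2 : le_plus L u (Some c2)) :
  restr F p1 y1 = restr F p2 y2.
Proof.
  destruct u as [b|].
  - apply (Hmono (fbot L) b (fbot_le L b)).
    rewrite (restr_comp _ _ F _ _ _ _ _ (fbot_le L c1 : le_plus L (Some (fbot L)) (Some c1))).
    rewrite (restr_comp _ _ F _ _ _ _ _ (fbot_le L c2 : le_plus L (Some (fbot L)) (Some c2))).
    congruence.
  - assert (q : le_plus L None (Some (fbot L))) by exact I.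
    rewrite <- (restr_comp _ _ F _ _ _ q (fbot_le L c1 : le_plus L (Some (fbot L)) (Some c1)) p1).
    rewrite <- (restr_comp _ _ F _ _ _ q (fbot_le L c2 : le_plus L (Some (fbot L)) (Some c2)) p2).
    congruence.
Qed.
End K.

Theorem lemma11 (L : Frame) (F : Presheaf (Lplus L) (le_plus L))
  (HF : is_sheaf F) (Hmono : is_mono F) (x : sec F (Some (fbot L))) :
  let s := fsup (fun c : L => in_fibre F c x) in
  in_fibre F s x /\ (forall c : L, in_fibre F c x -> fle c s).
Proof.
  intro s. split; [| intros c Hc; apply fsup_ub; exact Hc].
  set (R := fun u : Lplus L => exists c, in_fibre F c x /\ le_plus L u (Some c)).
  assert (Hbot : in_fibre F (fbot L) x).
  { exists x. apply restr_id. }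
  assert (Hsv : is_sieve (le_plus L) R (Some s)).
  { split.
    - intros [b|] [c [Hc Hb]]; simpl in *; [|exact I].
      eapply fle_trans; [exact Hb|]. apply fsup_ub; exact Hc.
    - intros b c [d [Hd Hb]] Hcb. exists d. split; [exact Hd|].
      destruct c as [c|]; [|exact I]. destruct b as [b|]; simpl in *; [|contradiction].
      eapply fle_trans; eauto. }
  assert (Hcov : covers (le_plus L) R (Some s)).
  { split; [apply Hsv|].
    intros u Hu. destruct u as [u|].
    - simpl. apply fsup_least. intros a Ha. apply (Hu (Some a)).
      exists a. split; [exact Ha| apply fle_refl].
    - exfalso. apply (Hu (Some (fbot L))). exists (fbot L). split; [exact Hbot|apply fle_refl]. }
  destruct (HF _ R Hsv Hcov) as [_ Hglue].
  set (fam := fun (u : Lplus L) (hu : R u) =>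
    let c := proj1_sig (constructive_indefinite_description _ hu) in
    let Hc := proj2_sig (constructive_indefinite_description _ hu) in
    let y := proj1_sig (constructive_indefinite_description _ (proj1 Hc)) in
    restr F (proj2 Hc) y).
  assert (Hcomp : compatible F R fam).
  { intros b c hb hc p. unfold fam.
    destruct (constructive_indefinite_description _ hb) as [c1 [H1 p1]]; simpl.
    destruct (constructive_indefinite_description _ hc) as [c2 [H2 p2]]; simpl.
    match goal with |- context [constructive_indefinite_description ?P (proj1 ?h)] => destruct (constructive_indefinite_description P (proj1 h)) as [y1 e1] end; simpl.
    match goal with |- context [constructive_indefinite_description ?P (proj1 ?h)] => destruct (constructive_indefinite_description P (proj1 h)) as [y2 e2] end; simpl.
    assert (r : le_plus L c (Some c1)).
    { destruct c as [c|]; [|exact I]. destruct b as [b|]; simpl in *; [|contradiction].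
      exact (fle_trans _ _ _ _ p p1). }
    rewrite (restr_comp _ _ F _ _ _ p _ r).
    apply (key L F Hmono x); assumption. }
  destruct (Hglue fam Hcomp) as [z Hz].
  exists z.
  assert (hb : R (Some (fbot L))).
  { exists (fbot L). split; [exact Hbot|apply fle_refl]. }
  rewrite (Hz _ hb).
  unfold fam.
  destruct (constructive_indefinite_description _ hb) as [c1 [H1 p1]]; simpl.
  match goal with |- context [constructive_indefinite_description ?P (proj1 ?h)] => destruct (constructive_indefinite_description P (proj1 h)) as [y1 e1] end; simpl.
  transitivity (restr F (fle_refl L (fbot L) : le_plus L (Some (fbot L)) (Some (fbot L))) x); [| apply restr_id].
  apply (key L F Hmono x); [exact e1| apply restr_id].
Qed.
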